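(* Let $X\subset\mathbb{R}^d$ be a finite point cloud in general position and $1\le k<d$. Consider persistent homology of the Delaunay--Rips filtration computed with respect to a simplexwise refinement compatible with $\prec$. Then every $k$-simplex that gives birth to a $k$-dimensional persistence pair $(\sigma,\tau)$ of positive persistence (i.e., $\delta(\tau)>\delta(\sigma)$) belongs to $\mathrm{USC}^k\setminus\mathrm{MSA}^k$.
   Context: General position: no $d+1$ points on a common affine hyperplane, no $d+2$ on a common $(d-1)$-sphere; $\mathsf{DEL}$ is the Delaunay complex of $X$, $\mathsf{DEL}^k$ its $k$-simplices, $\delta$ the Euclidean diameter. Delaunay--Rips filtration: $\mathcal{DR}_r=\{\sigma\in\mathsf{DEL}:\delta(\sigma)\le2r\}$. Total orders $\prec$ on $\mathsf{DEL}^k$: for edges, $\sigma\prec\sigma'$ iff $\delta(\sigma)<\delta(\sigma')$ or ($\delta(\sigma)=\delta(\sigma')$ and $\sigma$ lexicographically precedes $\sigma'$); for $(k+1)$-simplices, $\sigma\prec\sigma'$ iff $\max\partial\sigma\prec\max\partial\sigma'$ or ($\max\partial\sigma=\max\partial\sigma'$ and $\sigma$ lexicographically precedes $\sigma'$), $\partial$ denoting the set of facets. A simplexwise refinement compatible with $\prec$ is a total order on all simplices of $\mathsf{DEL}$ in which every simplex comes after its faces, simplices of smaller diameter come before those of larger diameter, and simplices of the same dimension appear in $\prec$ order; persistence pairs $(\sigma,\tau)$ (creator $\sigma$, destroyer $\tau$) are those of this simplexwise filtration, with persistence $\delta(\tau)-\delta(\sigma)$. A set $S\subseteq\mathsf{DEL}^k$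 is a $k$-spanning acycle if $L=\mathsf{DEL}^{(k-1)}\cup S$ satisfies $\tilde\beta_k(L)=\tilde\beta_{k-1}(L)=0$; $\mathrm{MSA}^k$ is the minimum $k$-spanning acycle w.r.t. $\prec$ (unique minimizer of $\sum_{\sigma\in S}w(\sigma)$ for any $w$ strictly increasing along $\prec$). $\mathrm{USC}^k=\{\sigma\in\mathsf{DEL}^k:\sigma\prec\max\partial\tau\text{ for every }(k+1)\text{-simplex }\tau\in\mathsf{DEL}\text{ with }\sigma\subset\tau\}$. *)

(* Defs.v *)
From HB Require Import structures.
From mathcomp Require Import all_boot all_order all_algebra.
From mathcomp Require Import boolp reals.
Set Implicit Arguments. Unset Strict Implicit. Unset Printing Implicit Defensive.
Import Order.TTheory GRing.Theory Num.Theory.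
Local Open Scope ring_scope.

Fixpoint lexlt (s t : seq nat) : bool :=
  match s, t with
  | [::], [::] => false
  | [::], _ :: _ => true
  | _ :: _, [::] => false
  | x :: s', y :: t' => (x < y)%N || ((x == y) && lexlt s' t')
  end.

Definition labels n (s : {set 'I_n}) : seq nat := sort leq [seq val i | i <- enum s].

Definition lexprec n (s t : {set 'I_n}) : bool := lexlt (labels s) (labels t).

Definition facet n (f t : {set 'I_n}) : bool := (f \subset t) && (#|t| == #|f|.+1).

Definition maxfacet_with n (r : rel {set 'I_n}) (t : {set 'I_n}) : {set 'I_n} :=
  odflt t [pick f | facet f t && [forall g, (facet g t && (g != f)) ==> r g f]].

(* incidence coefficient [sigma : tau] of the oriented simplicial boundary,
   vertices oriented by increasing label *)
Definition bdcoef (F : nzRingType) n (sigma tau : {set 'I_n}) : F :=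
  if facet sigma tau
  then \sum_(v in tau :\: sigma) (-1) ^+ #|[set u in tau | (u < v)%N]|
  else 0.

Section Geometry.
Variables (R : realType) (d n : nat) (P : 'I_n -> 'rV[R]_d).

Definition sqdist (x y : 'rV[R]_d) : R := \sum_(j < d) (x 0 j - y 0 j) ^+ 2.
Definition edist (x y : 'rV[R]_d) : R := Num.sqrt (sqdist x y).

Definition diam (s : {set 'I_n}) : R :=
  \big[Num.max/0]_(i in s) \big[Num.max/0]_(j in s) edist (P i) (P j).

Definition general_position : Prop :=
  (forall S : {set 'I_n}, #|S| = d.+1 ->
     ~ exists (a : 'rV[R]_d) (b : R),
         a != 0 /\ forall i, i \in S -> \sum_(j < d) a 0 j * P i 0 j = b) /\
  (forall S : {set 'I_n}, #|S| = d.+2 ->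
     ~ exists (c : 'rV[R]_d) (r : R), forall i, i \in S -> sqdist (P i) c = r).

(* Delaunay simplex: nonempty, with an empty circumsphere
   (equivalently, the Voronoi cells of its vertices have a common point) *)
Definition is_delaunay (s : {set 'I_n}) : Prop :=
  s != set0 /\
  exists (c : 'rV[R]_d) (r : R),
    (forall i, i \in s -> sqdist (P i) c = r) /\ (forall j, r <= sqdist (P j) c).

Definition DEL : {set {set 'I_n}} := [set s | `[< is_delaunay s >]].
Definition DELk (k : nat) : {set {set 'I_n}} := [set s in DEL | #|s| == k.+1].

(* the order prec on edges, extended recursively to higher dimensions;
   prec_aux m compares (m+1)-simplices *)
Fixpoint prec_aux (m : nat) : rel {set 'I_n} :=
  match m with
  | 0 => fun s t => (diam s < diam t) || ((diam s == diam t) && lexprec s t)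
  | m'.+1 => fun s t =>
      let ms := maxfacet_with (prec_aux m') s in
      let mt := maxfacet_with (prec_aux m') t in
      prec_aux m' ms mt || ((ms == mt) && lexprec s t)
  end.

Definition prec (k : nat) : rel {set 'I_n} := prec_aux k.-1.
Definition maxbd (k : nat) (t : {set 'I_n}) : {set 'I_n} := maxfacet_with (prec k) t.

Definition USC (k : nat) (s : {set 'I_n}) : Prop :=
  s \in DELk k /\
  forall t, t \in DELk k.+1 -> s \subset t -> prec k s (maxbd k t).

(* simplexwise refinement of the Delaunay--Rips filtration compatible with prec,
   given as the list of all Delaunay simplices in filtration order *)
Definition simplexwise_refinement (s : seq {set 'I_n}) : Prop :=
  [/\ uniq s,
      (forall x, x \in s = (x \in DEL)),
      (forall x y, x \in s -> y \in s -> x \proper y -> (index x s < index y s)%N),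
      (forall x y, x \in s -> y \in s -> diam x < diam y -> (index x s < index y s)%N)
    & (forall k x y, (1 <= k)%N -> x \in s -> y \in s -> #|x| = k.+1 -> #|y| = k.+1 ->
         prec k x y -> (index x s < index y s)%N)].

Section Homology.
Variable F : fieldType.

Definition allsets : seq {set 'I_n} := enum [set: {set 'I_n}].

(* matrix of the (augmented, via the empty simplex) boundary map
   C_k(L) -> C_{k-1}(L), L given as a set of simplices *)
Definition chainbd (L : {set {set 'I_n}}) (k : nat) : 'M[F]_(size allsets) :=
  \matrix_(a < size allsets, b < size allsets)
    let x := nth set0 allsets a in let y := nth set0 allsets b in
    if (x \in L) && (y \in L) && (#|y| == k.+1) then bdcoef F x y else 0.

(* reduced Betti number (over F) of the complex L (not containing the empty set) *)
Definition reduced_betti (L : {set {set 'I_n}}) (k : nat) : int :=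
  let L' := (set0 : {set 'I_n}) |: L in
  (#|[set x in L | #|x| == k.+1]|)%:Z - (\rank (chainbd L' k))%:Z
    - (\rank (chainbd L' k.+1))%:Z.

Definition spanning_acycle (k : nat) (S : {set {set 'I_n}}) : Prop :=
  S \subset DELk k /\
  let L := [set x in DEL | (#|x| <= k)%N] :|: S in
  reduced_betti L k = 0 /\ reduced_betti L k.-1 = 0.

Definition increasing_weight (k : nat) (w : {set 'I_n} -> R) : Prop :=
  forall x y, x \in DELk k -> y \in DELk k -> prec k x y -> w x < w y.

Definition is_MSA (k : nat) (S : {set {set 'I_n}}) : Prop :=
  spanning_acycle k S /\
  forall w, increasing_weight k w ->
  forall S', spanning_acycle k S' -> \sum_(x in S) w x <= \sum_(x in S') w x.

Definition filt_bd (s : seq {set 'I_n}) : 'M[F]_(size s) :=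
  \matrix_(a < size s, b < size s) bdcoef F (nth set0 s a) (nth set0 s b).

Definition rk (s : seq {set 'I_n}) (a b : nat) : nat :=
  \rank (\matrix_(x < size s, y < size s)
           if (a <= x)%N && (y < b)%N then filt_bd s x y else 0).

(* (nth s i, nth s j) is a persistence pair (Pairing Lemma characterization:
   the lowest nonzero entry of column j of the reduced boundary matrix is in row i) *)
Definition persistence_pair (s : seq {set 'I_n}) (i j : nat) : Prop :=
  [/\ (i < size s)%N, (j < size s)%N &
      (rk s i j.+1 + rk s i.+1 j = rk s i.+1 j.+1 + rk s i j + 1)%N].

End Homology.
End Geometry.

(* Main.v *)
Require Import Defs.
From HB Require Import structures.
From mathcomp Require Import all_boot all_order all_algebra.
From mathcomp Require Import boolp reals.
Import Order.TTheory GRing.Theory Num.Theory.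
Local Open Scope ring_scope.
From mathcomp Require Import zify ring.
Set Implicit Arguments. Unset Strict Implicit.

Lemma lexlt_irr s : lexlt s s = false.
Proof. by elim: s => //= x s ->; rewrite ltnn eqxx. Qed.

Lemma lexlt_trans s t u : lexlt s t -> lexlt t u -> lexlt s u.
Proof.
elim: s t u => [|x s IH] [|y t] [|z u] //=.
case/orP=> [xy|/andP[/eqP<- st]]; case/orP=> [yz|/andP[/eqP<- tu]].
- by rewrite (ltn_trans xy yz).
- by rewrite xy.
- by rewrite yz.
- by rewrite eqxx (IH _ _ st tu) orbT.
Qed.

Lemma lexlt_total s t : s != t -> lexlt s t || lexlt t s.
Proof.
elim: s t => [|x s IH] [|y t] //=.
case: (ltngtP x y) => //= -> /=; rewrite eqseq_cons eqxx /=.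
by move/IH; rewrite orbC.
Qed.

Lemma labels_inj n (s t : {set 'I_n}) : labels s = labels t -> s = t.
Proof.
move=> e; apply/setP => x.
have: (val x \in labels s) = (val x \in labels t) by rewrite e.
by rewrite !mem_sort !(mem_map val_inj) !mem_enum.
Qed.

Lemma lexprec_irr n (s : {set 'I_n}) : lexprec s s = false.
Proof. exact: lexlt_irr. Qed.
Lemma lexprec_trans n (s t u : {set 'I_n}) : lexprec s t -> lexprec t u -> lexprec s u.
Proof. exact: lexlt_trans. Qed.
Lemma lexprec_total n (s t : {set 'I_n}) : s != t -> lexprec s t || lexprec t s.
Proof.
move=> st; apply: lexlt_total; apply: contra st => /eqP/labels_inj ->; done.
Qed.


Lemma facet_del n (t : {set 'I_n}) x : x \in t -> facet (t :\ x) t.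
Proof.
move=> xt; rewrite /facet subD1set /= (cardsD1 x t) xt /=; done.
Qed.

Lemma maxfacet_spec n (r : rel {set 'I_n}) (t : {set 'I_n}) :
  (0 < #|t|)%N ->
  (forall x, r x x = false) ->
  (forall x y z, r x y -> r y z -> r x z) ->
  (forall x y, facet x t -> facet y t -> x != y -> r x y || r y x) ->
  facet (maxfacet_with r t) t /\
  (forall g, facet g t -> g != maxfacet_with r t -> r g (maxfacet_with r t)).
Proof.
move=> t0 irr tr tot.
have [x0 x0t] : exists x0, x0 \in t by apply/set0Pn; rewrite -card_gt0.
pose B f := [set g | facet g t && r g f].
have f0P : facet (t :\ x0) t by apply: facet_del.
case: (@arg_maxnP _ (t :\ x0) (fun f => facet f t) (fun f => #|B f|) f0P) => f ff fmax.
have Pf : facet f t && [forall g, (facet g t && (g != f)) ==> r g f].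
  rewrite ff /=; apply/forallP => g; apply/implyP => /andP[gf ngf].
  apply/negPn/negP => ngf'.
  have rfg : r f g by move: (tot _ _ gf ff ngf); rewrite (negbTE ngf').
  have : B f \proper B g.
    apply/properP; split.
      apply/subsetP => h; rewrite !inE => /andP[-> hf] /=; exact: tr hf rfg.
    by exists f; rewrite !inE ?ff ?rfg ?irr ?andbF.
  have le : (#|B g| <= #|B f|)%N := fmax g gf; move/proper_card; by rewrite ltnNge le.
rewrite /maxfacet_with; case: pickP => [m /andP[mf /forallP mall]|/(_ f)]; last by rewrite Pf.
split=> // g gf gm; move: (mall g); rewrite gf gm /=; done.
Qed.


Section Ord.
Variables (R : realType) (d n : nat) (P : 'I_n -> 'rV[R]_d).
Implicit Types (s t x y z g : {set 'I_n}).

Lemma edist_ge0 (x y : 'rV[R]_d) : 0 <= edist x y.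
Proof. exact: sqrtr_ge0. Qed.

Lemma diam_ge0 s : 0 <= diam P s.
Proof.
rewrite /diam; elim/big_ind: _ => //; first by move=> a b; rewrite le_max => ->.
move=> i _; elim/big_ind: _ => //; first by move=> a b; rewrite le_max => ->.
move=> j _; exact: edist_ge0.
Qed.

Lemma edist_le_diam s a b : a \in s -> b \in s -> edist (P a) (P b) <= diam P s.
Proof.
move=> ha hb; rewrite /diam.
apply: le_trans (le_bigmax_cond _ _ ha).
exact: (le_bigmax_cond _ _ hb).
Qed.

Lemma diam_le s (x : R) : 0 <= x -> (forall a b, a \in s -> b \in s -> edist (P a) (P b) <= x) ->
  diam P s <= x.
Proof.
move=> x0 h; rewrite /diam; apply/bigmax_leP; split=> // a ha.
apply/bigmax_leP; split=> // b hb; exact: h.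
Qed.

Lemma diam_sub s t : s \subset t -> diam P s <= diam P t.
Proof.
move=> st; apply: diam_le; first exact: diam_ge0.
move=> a b ha hb; apply: edist_le_diam; exact: (subsetP st).
Qed.

Lemma prec_irr m x : prec_aux P m x x = false.
Proof.
elim: m x => [|m IH] x /=; first by rewrite ltxx eqxx lexprec_irr.
by rewrite IH eqxx lexprec_irr.
Qed.

Lemma prec_trans m x y z : prec_aux P m x y -> prec_aux P m y z -> prec_aux P m x z.
Proof.
elim: m x y z => [|m IH] x y z /=.
  case/orP=> [lxy|/andP[/eqP exy lxy]]; case/orP=> [lyz|/andP[/eqP eyz lyz]].
  - by rewrite (lt_trans lxy lyz).
  - by rewrite -eyz lxy.
  - by rewrite exy lyz.
  - by rewrite exy eyz eqxx (lexprec_trans lxy lyz) orbT.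
case/orP=> [lxy|/andP[/eqP exy lxy]]; case/orP=> [lyz|/andP[/eqP eyz lyz]].
- by rewrite (IH _ _ _ lxy lyz).
- by rewrite -eyz lxy.
- by rewrite exy lyz.
- by rewrite exy eyz eqxx (lexprec_trans lxy lyz) orbT.
Qed.

Lemma mf_spec_gen m (tot : forall x y, #|x| = m.+2 -> #|y| = m.+2 -> x != y ->
     prec_aux P m x y || prec_aux P m y x) t : #|t| = m.+3 ->
  facet (maxfacet_with (prec_aux P m) t) t /\
  (forall g, facet g t -> g != maxfacet_with (prec_aux P m) t ->
     prec_aux P m g (maxfacet_with (prec_aux P m) t)).
Proof.
move=> ht; apply: maxfacet_spec; first by rewrite ht.
- exact: prec_irr.
- exact: prec_trans.
move=> x y /andP[_ /eqP hx] /andP[_ /eqP hy]; apply: tot; apply/eqP;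
  by rewrite -eqSS -?hx -?hy ht.
Qed.

Lemma prec_total m x y : #|x| = m.+2 -> #|y| = m.+2 -> x != y ->
  prec_aux P m x y || prec_aux P m y x.
Proof.
elim: m x y => [|m IH] x y hx hy xy /=.
  case: (ltgtP (diam P x) (diam P y)) => //= _; exact: lexprec_total.
have [fx _] := mf_spec_gen IH hx.
have [fy _] := mf_spec_gen IH hy.
set mx := maxfacet_with _ x in fx *; set my := maxfacet_with _ y in fy *.
case: (eqVneq mx my) => [e|ne].
  by rewrite e prec_irr /=; case/orP: (lexprec_total xy) => ->; rewrite ?orbT.
rewrite !andFb !orbF; apply: IH => //.
  by move: fx => /andP[_ /eqP]; rewrite hx => -[].
by move: fy => /andP[_ /eqP]; rewrite hy => -[].
Qed.

Lemma mf_spec m t : #|t| = m.+3 ->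
  facet (maxfacet_with (prec_aux P m) t) t /\
  (forall g, facet g t -> g != maxfacet_with (prec_aux P m) t ->
     prec_aux P m g (maxfacet_with (prec_aux P m) t)).
Proof. apply: mf_spec_gen; exact: prec_total. Qed.

Lemma mf_diam_gen m (pd : forall x y, #|x| = m.+2 -> #|y| = m.+2 ->
    prec_aux P m x y -> diam P x <= diam P y) t : #|t| = m.+3 ->
  diam P t <= diam P (maxfacet_with (prec_aux P m) t).
Proof.
move=> ht; have [fm hm] := mf_spec ht.
have hmsz : #|maxfacet_with (prec_aux P m) t| = m.+2.
  by move: fm => /andP[_ /eqP]; rewrite ht => -[].
apply: diam_le; first exact: diam_ge0.
move=> a b ha hb.
have : (0 < #|t :\ a :\ b|)%N.
  have h1 := cardsD1 a t; have h2 := cardsD1 b (t :\ a).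
  rewrite ha ht in h1; case: (b \in t :\ a) in h2; lia.
rewrite card_gt0 => /set0Pn [c]; rewrite !inE => /and3P[cb ca ct].
have fc := facet_del ct.
have : edist (P a) (P b) <= diam P (t :\ c).
  by apply: edist_le_diam; rewrite !inE ?ha ?hb andbT eq_sym.
move/le_trans; apply.
case: (eqVneq (t :\ c) (maxfacet_with (prec_aux P m) t)) => [->//|ne].
apply: pd => //; last exact: hm.
by move: fc => /andP[_ /eqP]; rewrite ht => -[].
Qed.

Lemma prec_diam m x y : #|x| = m.+2 -> #|y| = m.+2 ->
  prec_aux P m x y -> diam P x <= diam P y.
Proof.
elim: m x y => [|m IH] x y hx hy /=.
  by case/orP=> [/ltW//|/andP[/eqP-> _]].
have [fx _] := mf_spec hx; have [fy _] := mf_spec hy.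
have dx := mf_diam_gen IH hx.
have dy : diam P (maxfacet_with (prec_aux P m) y) <= diam P y.
  by apply: diam_sub; case/andP: fy.
have hmx : #|maxfacet_with (prec_aux P m) x| = m.+2.
  by move: fx => /andP[_ /eqP]; rewrite hx => -[].
have hmy : #|maxfacet_with (prec_aux P m) y| = m.+2.
  by move: fy => /andP[_ /eqP]; rewrite hy => -[].
case/orP=> [l|/andP[/eqP e _]].
  apply: le_trans dx _; apply: le_trans dy; exact: IH.
by apply: le_trans dx _; rewrite e.
Qed.

Lemma mf_diam m t : #|t| = m.+3 ->
  diam P t <= diam P (maxfacet_with (prec_aux P m) t).
Proof. apply: mf_diam_gen; exact: prec_diam. Qed.

End Ord.


Section RK.
Variables (F : fieldType) (n : nat) (s : seq {set 'I_n}).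

Definition rkmx (a b : nat) : 'M[F]_(size s) :=
  \matrix_(x < size s, y < size s)
           if (a <= x)%N && (y < b)%N then filt_bd F s x y else 0.

Lemma rkE a b : rk F s a b = \rank (rkmx a b).
Proof. by []. Qed.

Lemma rk_sub a b : (rkmx a.+1 b <= rkmx a b)%MS.
Proof.
apply/row_subP => r.
case: (eqVneq (val r) a) => [ra|ra].
  have -> : row r (rkmx a.+1 b) = 0.
    by apply/rowP => y; rewrite !mxE ra ltnn.
  exact: sub0mx.
have -> : row r (rkmx a.+1 b) = row r (rkmx a b).
  apply/rowP => y; rewrite !mxE.
  by have -> : (a < r)%N = (a <= r)%N by rewrite ltn_neqAle eq_sym ra.
exact: row_sub.
Qed.

Lemma rk_mono a b : (rk F s a.+1 b <= rk F s a b)%N.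
Proof. exact: mxrankS (rk_sub a b). Qed.

Lemma rk_step (i b l : nat) (hl : (l < b)%N) (hlsz : (l < size s)%N) (hi : (i < size s)%N) :
  (forall r, (i < r < size s)%N -> bdcoef F (nth set0 s r) (nth set0 s l) = 0) ->
  bdcoef F (nth set0 s i) (nth set0 s l) != 0 ->
  rk F s i b = (rk F s i.+1 b).+1.
Proof.
move=> h0 hnz; rewrite !rkE.
set A := rkmx i b; set B := rkmx i.+1 b.
pose ii := Ordinal hi; pose ll := Ordinal hlsz.
have BA : (B <= A)%MS by exact: rk_sub.
have nAB : ~~ (A <= B)%MS.
  apply/negP => AB.
  have /submxP [D hD] := submx_trans (row_sub ii A) AB.
  have := congr1 (fun M : 'M[F]_(1, size s) => M 0 ll) hD.
  rewrite !mxE leqnn hl /=.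
  rewrite big1 => [e|r _]; first by move: hnz; rewrite e eqxx.
  rewrite /B !mxE; case: ifP => [/andP[ir _]|_]; last by rewrite mulr0.
  by rewrite h0 ?mulr0 // ir ltn_ord.
apply/eqP; rewrite eqn_leq; apply/andP; split.
  have : (A <= B + row ii A)%MS.
    apply/row_subP => r.
    case: (eqVneq r ii) => [->|rne]; first exact: addsmxSr.
    have -> : row r A = row r B.
      apply/rowP => y; rewrite !mxE.
      have -> : (i < r)%N = (i <= r)%N.
        by rewrite ltn_neqAle andbC; case: (i <= r)%N => //=; apply: contra rne => /eqP e; apply/eqP/val_inj.
      done.
    apply: submx_trans (addsmxSl _ _); exact: row_sub.
  move/mxrankS => h; apply: leq_trans h _.
  apply: leq_trans (mxrank_adds_leqif _ _) _.
  by rewrite -[X in (_ <= X)%N]addn1 leq_add2l; apply: rank_leq_row.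
apply: rank_ltmx; rewrite ltmxE BA; exact: nAB.
Qed.

End RK.


Lemma bdcoef_facet (F : fieldType) n (x y : {set 'I_n}) : bdcoef F x y != 0 -> facet x y.
Proof. by rewrite /bdcoef; case: ifP => //; rewrite eqxx. Qed.

Lemma facet_diff1 n (x y : {set 'I_n}) : facet x y -> exists v, y :\: x = [set v].
Proof.
case/andP=> xy /eqP hy; apply/cards1P.
by rewrite cardsD (setIidPr xy) hy subSnn.
Qed.

Lemma bdcoef_nz (F : fieldType) n (x y : {set 'I_n}) : facet x y -> bdcoef F x y != 0.
Proof.
move=> f; rewrite /bdcoef f; have [v ->] := facet_diff1 f.
by rewrite big_set1 signr_eq0.
Qed.

Section Main.
Variables (R : realType) (d n : nat) (P : 'I_n -> 'rV[R]_d) (F : fieldType).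
Variables (k : nat) (hk1 : (1 <= k)%N) (s : seq {set 'I_n}).
Hypothesis hs : simplexwise_refinement P s.
Implicit Types (x y z t : {set 'I_n}).

Lemma del_sub x y : y \in DEL P -> x \subset y -> x != set0 -> x \in DEL P.
Proof.
rewrite /DEL !inE => /asboolP [_ [c [r [h1 h2]]]] xy x0; apply/asboolP; split=> //.
exists c, r; split=> // i ix; apply: h1; exact: (subsetP xy).
Qed.

Lemma s_uniq : uniq s. Proof. by case: hs. Qed.
Lemma mem_s x : (x \in s) = (x \in DEL P). Proof. by case: hs => _ h _ _ _; apply: h. Qed.
Lemma s_prec x y : x \in s -> y \in s -> #|x| = k.+1 -> #|y| = k.+1 ->
  prec P k x y -> (index x s < index y s)%N.
Proof. case: hs => _ _ _ _ h; exact: h. Qed.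
Lemma s_diam x y : x \in s -> y \in s -> diam P x < diam P y -> (index x s < index y s)%N.
Proof. case: hs => _ _ _ h _; exact: h. Qed.

Lemma precK x y : prec P k x y = prec_aux P k.-1 x y. Proof. by []. Qed.

Lemma mf_k t : #|t| = k.+2 ->
  facet (maxbd P k t) t /\ (forall g, facet g t -> g != maxbd P k t -> prec P k g (maxbd P k t)).
Proof. move=> ht; apply: mf_spec; rewrite ht; lia. Qed.

Lemma prec_tot_k x y : #|x| = k.+1 -> #|y| = k.+1 -> x != y -> prec P k x y || prec P k y x.
Proof. move=> hx hy; apply: prec_total; lia. Qed.

Lemma usc_part (i j : nat) (hi : (i < size s)%N) (hj : (j < size s)%N)
  (hr : (rk F s i j.+1 + rk F s i.+1 j = rk F s i.+1 j.+1 + rk F s i j + 1)%N)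
  (hdim : #|nth set0 s i| = k.+1)
  (hpos : diam P (nth set0 s i) < diam P (nth set0 s j)) :
  USC P k (nth set0 s i).
Proof.
set sg := nth set0 s i; set tau := nth set0 s j.
have sgs : sg \in s by apply: mem_nth.
have taus : tau \in s by apply: mem_nth.
have isg : index sg s = i by rewrite index_uniq // s_uniq.
have itau : index tau s = j by rewrite index_uniq // s_uniq.
split; first by rewrite inE -mem_s sgs hdim eqxx.
move=> t; rewrite inE => /andP[tD /eqP ht] sgt.
have [fm hm] := mf_k ht.
apply/negPn/negP => np.
have fsg : facet sg t by rewrite /facet sgt ht hdim eqxx.
have em : sg = maxbd P k t.
  apply/eqP; apply/negPn/negP => ne; by rewrite (hm _ fsg ne) in np.
have dt : diam P t <= diam P sg.
  rewrite em /maxbd /prec; apply: mf_diam; rewrite ht; lia.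
have ts : t \in s by rewrite mem_s.
have lt : (index t s < j)%N by rewrite -itau; apply: s_diam => //; exact: le_lt_trans hpos.
have lsz : (index t s < size s)%N by rewrite index_mem.
have h0 : forall r, (i < r < size s)%N -> bdcoef F (nth set0 s r) (nth set0 s (index t s)) = 0.
  move=> r /andP[ir rs]; rewrite nth_index //.
  apply/eqP/negPn/negP => /bdcoef_facet fr.
  have rne : nth set0 s r != sg.
    apply/negP => /eqP e; move: (congr1 (fun x => index x s) e).
    rewrite isg index_uniq ?s_uniq // => e'; by rewrite e' ltnn in ir.
  have := hm _ fr; rewrite -em => /(_ rne) p.
  have hrsz : #|nth set0 s r| = k.+1.
    by move: fr => /andP[_ /eqP]; rewrite ht => -[].
  have := s_prec (mem_nth _ rs) sgs hrsz hdim p.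
  rewrite isg index_uniq ?s_uniq // => rl; by move: (ltn_trans ir rl); rewrite ltnn.
have hnz : bdcoef F (nth set0 s i) (nth set0 s (index t s)) != 0.
  by rewrite nth_index //; apply: bdcoef_nz.
have e1 := rk_step (leq_trans lt (leqnSn _)) lsz hi h0 hnz.
have e2 := rk_step lt lsz hi h0 hnz.
rewrite e1 e2 in hr; clear -hr; lia.
Qed.

End Main.


Section DD.
Variables (F : fieldType) (n : nat).
Implicit Types (x y z : {set 'I_n}).

Definition Ncnt y (v : 'I_n) := #|[set u in y | (u < v)%N]|.

Lemma bdcoef_one x y v : x \subset y -> y :\: x = [set v] ->
  bdcoef F x y = (-1) ^+ Ncnt y v.
Proof.
move=> xy e.
have f : facet x y.
  rewrite /facet xy /=; have := cardsD y x; rewrite e cards1 (setIidPr xy) => h.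
  have := subset_leq_card xy => le; apply/eqP; by rewrite -(subnK le) -h add1n.
by rewrite /bdcoef f e big_set1.
Qed.

Lemma bdbd_gen (S : {set {set 'I_n}}) x y :
  (forall z, z \subset y -> z != set0 -> z \in S) ->
  \sum_(z in S) bdcoef F x z * bdcoef F z y = 0.
Proof.
move=> hS.
have zero z : bdcoef F x z * bdcoef F z y != 0 -> facet x z /\ facet z y.
  case: (eqVneq (bdcoef F x z) 0) => [->|/bdcoef_facet h1]; first by rewrite mul0r eqxx.
  case: (eqVneq (bdcoef F z y) 0) => [->|/bdcoef_facet h2]; first by rewrite mulr0 eqxx.
  done.
case: (boolP ((x \subset y) && (#|y| == #|x| + 2)%N)) => [/andP[xy /eqP hy]|nh]; last first.
  apply: big1 => z _; apply/eqP/negPn/negP => /zero [/andP[xz /eqP hz] /andP[zy /eqP hz']].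
  move: nh; rewrite (subset_trans xz zy) hz' hz /=; rewrite addn2 eqxx //.
have : #|y :\: x| == 2%N by rewrite cardsD (setIidPr xy) hy addKn.
case/cards2P => a0 [b0 [ab0 e0]].
wlog ab : a0 b0 ab0 e0 / (a0 < b0)%N.
  move=> W; case: (ltngtP a0 b0) => h; first exact: (W a0 b0).
    by apply: (W b0 a0) => //; [rewrite eq_sym | rewrite setUC].
  by move: ab0; rewrite (val_inj h) eqxx.
have E u : (u \notin x) && (u \in y) = (u == a0) || (u == b0).
  by move: (congr1 (fun S : {set 'I_n} => u \in S) e0); rewrite !inE.
have ba : b0 != a0 by rewrite eq_sym.
have [nxa ya] : a0 \notin x /\ a0 \in y by move: (E a0); rewrite eqxx /= => /andP.
have [nxb yb] : b0 \notin x /\ b0 \in y by move: (E b0); rewrite eqxx orbT /= => /andP.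
set z1 := y :\ b0; set z2 := y :\ a0.
have xz1 : x \subset z1.
  apply/subsetP => u ux; rewrite !inE (subsetP xy _ ux) andbT.
  by apply: contraNneq nxb => <-.
have xz2 : x \subset z2.
  apply/subsetP => u ux; rewrite !inE (subsetP xy _ ux) andbT.
  by apply: contraNneq nxa => <-.
have d1 : z1 :\: x = [set a0].
  apply/setP => u; rewrite !inE andbCA E.
  by case: (eqVneq u b0) => [->|ub] /=; rewrite ?(negbTE ba) ?orbF.
have d2 : z2 :\: x = [set b0].
  apply/setP => u; rewrite !inE andbCA E.
  by case: (eqVneq u a0) => [->|ua] /=; rewrite ?(negbTE ab0) ?orbF.
have d1' : y :\: z1 = [set b0].
  apply/setP => u; rewrite !inE; case: (eqVneq u b0) => [->|ub] /=; first by rewrite yb.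
  by rewrite andNb.
have d2' : y :\: z2 = [set a0].
  apply/setP => u; rewrite !inE; case: (eqVneq u a0) => [->|ua] /=; first by rewrite ya.
  by rewrite andNb.
have z1y : z1 \subset y by apply: subD1set.
have z2y : z2 \subset y by apply: subD1set.
have z1S : z1 \in S by apply: hS => //; apply/set0Pn; exists a0; rewrite !inE ya andbT.
have z2S : z2 \in S by apply: hS => //; apply/set0Pn; exists b0; rewrite !inE yb andbT.
have z12 : z2 != z1 by apply/negP => /eqP/setP/(_ a0); rewrite !inE eqxx ya ab0.
rewrite (bigD1 z1) //= (bigD1 z2) /=; last by rewrite z2S z12.
rewrite big1 ?addr0; last first.
  move=> z /andP[/andP[_ zz1] zz2]; apply/eqP/negPn/negP => /zero [fxz fzy].
  have [c ec] := facet_diff1 fzy.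
  have zy : z \subset y by case/andP: fzy.
  have ez : z = y :\ c.
    apply/setP => u; rewrite !inE.
    have := congr1 (fun S : {set 'I_n} => u \in S) ec; rewrite !inE => {}ec.
    case uz: (u \in z).
      rewrite (subsetP zy u uz) andbT; symmetry; apply/negP => /eqP uc; move: ec; rewrite uz uc eqxx //.
    by move: ec; rewrite uz /= => ->; case: (u == c).
  have cx : c \notin x.
    apply/negP => cx; have := subsetP (proj1 (andP fxz)) c cx; rewrite ez !inE eqxx //.
  have cy : c \in y by have := congr1 (fun S : {set 'I_n} => c \in S) ec; rewrite !inE eqxx => /andP[].
  move: (E c); rewrite cx cy /= => /esym/orP[/eqP ca|/eqP cb].
    by move: zz2; rewrite ez ca eqxx.
  by move: zz1; rewrite ez cb eqxx.
rewrite (bdcoef_one xz1 d1) (bdcoef_one z1y d1') (bdcoef_one xz2 d2) (bdcoef_one z2y d2').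
have N1 : Ncnt z1 a0 = Ncnt y a0.
  rewrite /Ncnt; apply: eq_card => u; rewrite !inE.
  case: (eqVneq u b0) => [->|] //=; rewrite ltnNge (ltnW ab) /=.
  by case: (b0 \in y).
have N2 : Ncnt y b0 = (Ncnt z2 b0).+1.
  rewrite /Ncnt -add1n -(cards1 a0) -cardsUI.
  have -> : [set a0] :&: [set u in z2 | (u < b0)%N] = set0.
    by apply/setP => u; rewrite !inE; case: (eqVneq u a0).
  rewrite cards0 addn0; apply: eq_card => u; rewrite !inE.
  by case: (eqVneq u a0) => [->|] //=; rewrite ya ab.
rewrite N1 N2 exprS; ring.
Qed.

End DD.


Section Betti.
Variables (R : realType) (d n : nat) (P : 'I_n -> 'rV[R]_d) (F : fieldType).
Variables (k : nat) (hk1 : (1 <= k)%N).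
Implicit Types (x y z : {set 'I_n}) (A S : {set {set 'I_n}}).
Local Notation N := (size (allsets n)).
Local Notation al := (allsets n).

Definition bdrow y : 'rV[F]_N := \row_(a < N) bdcoef F (nth set0 al a) y.
Definition SS A : 'M[F]_N := (\sum_(y in A) <<bdrow y>>)%MS.
Definition MSm A : 'M[F]_N :=
  \matrix_(b < N, a < N) if nth set0 al b \in A then bdcoef F (nth set0 al a) (nth set0 al b) else 0.

Lemma mem_allsets y : y \in al.
Proof. by rewrite /allsets mem_enum inE. Qed.
Lemma nth_allsets y : nth set0 al (index y al) = y.
Proof. by rewrite nth_index // mem_allsets. Qed.
Lemma index_allsets y : (index y al < N)%N.
Proof. by rewrite index_mem mem_allsets. Qed.

Lemma MS_SS A : (MSm A == SS A)%MS.
Proof.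
apply/andP; split.
  apply/row_subP => b; case h: (nth set0 al b \in A).
    have -> : row b (MSm A) = bdrow (nth set0 al b) by apply/rowP => a; rewrite !mxE h.
    by apply: (sumsmx_sup (nth set0 al b)) => //; rewrite genmxE.
  have -> : row b (MSm A) = 0 by apply/rowP => a; rewrite !mxE h.
  exact: sub0mx.
apply/sumsmx_subP => y yA; rewrite genmxE.
have -> : bdrow y = row (Ordinal (index_allsets y)) (MSm A).
  by apply/rowP => a; rewrite !mxE /= nth_allsets yA.
exact: row_sub.
Qed.

Lemma rank_SS_le A : (\rank (SS A) <= #|A|)%N.
Proof.
rewrite /SS; apply: leq_trans (leq_of_leqif (mxrank_sum_leqif _)) _ => /=.
rewrite -sum1_card; apply: leq_sum => y _.
by rewrite genmxE rank_leq_row.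
Qed.

Lemma SS_add y A : y \notin A -> SS (y |: A) = (<<bdrow y>> + SS A)%MS.
Proof.
move=> yA; rewrite /SS (bigD1 y) ?setU11 //=; congr (_ + _)%MS.
apply: eq_bigl => z; rewrite !inE; case: (eqVneq z y) => [->|_] /=.
  by rewrite (negbTE yA).
by rewrite andbT.
Qed.

Lemma rank_add_le y A : y \notin A -> (\rank (SS (y |: A)) <= (\rank (SS A)).+1)%N.
Proof.
move=> yA; rewrite SS_add //; apply: leq_trans (mxrank_adds_leqif _ _) _.
by rewrite genmxE -[X in (_ <= X)%N]add1n leq_add2r rank_leq_row.
Qed.

Lemma rank_add y A : y \notin A -> ~~ (bdrow y <= SS A)%MS ->
  \rank (SS (y |: A)) = (\rank (SS A)).+1.
Proof.
move=> yA nle; apply/eqP; rewrite eqn_leq rank_add_le //=.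
apply: rank_ltmx; rewrite ltmxE SS_add // addsmxSr /=.
apply: contra nle => h; apply: submx_trans h.
by apply: submx_trans (addsmxSl _ _); rewrite genmxE.
Qed.

Definition LL S := [set x in DEL P | (#|x| <= k)%N] :|: S.

Lemma notS S z : S \subset DELk P k -> (#|z| != k.+1) -> (z \in S) = false.
Proof.
move=> hS hz; apply/negP => zS.
by move: (subsetP hS z zS) hz; rewrite inE => /andP[_ ->].
Qed.

Lemma mem_L S z : S \subset DELk P k -> (#|z| != k.+1) ->
  (z \in LL S) = (z \in DEL P) && (#|z| <= k)%N.
Proof.
move=> hS hz; rewrite /LL in_setU in_set; case zS: (z \in S); rewrite ?orbF //.
by move: (subsetP hS z zS) hz; rewrite inE => /andP[_ ->].
Qed.

Lemma mem_L' S z : S \subset DELk P k -> (#|z| != k.+1) ->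
  (z \in set0 |: LL S) = (z == set0) || (z \in DEL P) && (#|z| <= k)%N.
Proof.
move=> hS hz; rewrite !inE; case zS: (z \in S); rewrite ?orbF //.
by move: (subsetP hS z zS) hz; rewrite inE => /andP[_ ->].
Qed.

Lemma chainbd_k S : S \subset DELk P k -> chainbd F (set0 |: LL S) k = (MSm S)^T.
Proof.
move=> hS; apply/matrixP => a b; rewrite !mxE.
set x := nth set0 al a; set y := nth set0 al b.
case yS: (y \in S).
  have := subsetP hS y yS; rewrite inE => /andP[yD /eqP hy].
  cbv zeta; rewrite hy eqxx andbT [y \in _]inE [y \in LL S]inE yS !orbT andbT.
  case xL: (x \in _) => //.
  symmetry; apply/eqP/negPn/negP => /bdcoef_facet /andP[xy /eqP hxy].
  have xD : x \in DEL P.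
    apply: (del_sub yD xy); apply/negP => /eqP x0; move: hxy; rewrite hy x0 cards0; case: k hk1 => //.
  have xk : (#|x| <= k)%N by move: hxy; rewrite hy => -[->].
  have : x \in set0 |: LL S by rewrite /LL in_setU1 in_setU in_set xD xk /= orbT.
  by rewrite xL.
cbv zeta; case: (eqVneq #|y| k.+1) => [hy|hy]; last by rewrite andbF.
rewrite andbT [y \in _]inE [y \in LL S]inE yS orbF.
case: (eqVneq y set0) => [y0|yn]; first by move: hy; rewrite y0 cards0.
rewrite in_set1 (negbTE yn) in_set hy ltnn andbF /=.
by rewrite andbF.
Qed.

Lemma chainbd_k1 S : S \subset DELk P k -> chainbd F (set0 |: LL S) k.+1 = 0.
Proof.
move=> hS; apply/matrixP => a b; rewrite !mxE.
set y := nth set0 al b.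
cbv zeta; case: (eqVneq #|y| k.+2) => [hy|]; last by rewrite andbF.
rewrite (mem_L' (z:=y) hS); last by rewrite hy eqSS neq_ltn ltnSn orbT.
case: (eqVneq y set0) => [y0|] /=; first by move: hy; rewrite y0 cards0.
by rewrite hy ltnNge leqW ?andbF.
Qed.

Lemma card_Lk S : S \subset DELk P k -> #|[set x in LL S | #|x| == k.+1]| = #|S|.
Proof.
move=> hS; apply: eq_card => x; rewrite !inE.
case xS: (x \in S).
  by move: (subsetP hS x xS); rewrite inE => /andP[_ ->]; rewrite orbT.
by rewrite orbF; case: (eqVneq #|x| k.+1) => [->|]; rewrite ?ltnn ?andbF.
Qed.

Lemma betti_k S : S \subset DELk P k ->
  reduced_betti F (LL S) k = (#|S|)%:Z - (\rank (SS S))%:Z.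
Proof.
move=> hS; rewrite /reduced_betti card_Lk // chainbd_k // chainbd_k1 //.
by rewrite mxrank_tr mxrank0 (eqmx_rank (MS_SS S)) subr0.
Qed.

Lemma betti_km1 S S' : S \subset DELk P k -> S' \subset DELk P k ->
  \rank (SS S) = \rank (SS S') ->
  reduced_betti F (LL S) k.-1 = reduced_betti F (LL S') k.-1.
Proof.
move=> hS hS' er; rewrite /reduced_betti.
have ek : k.-1.+1 = k by rewrite prednK.
rewrite ek chainbd_k // chainbd_k // !mxrank_tr (eqmx_rank (MS_SS S)) (eqmx_rank (MS_SS S')) er.
have nk : k != k.+1 by rewrite neq_ltn ltnSn.
congr (_ - _ - _).
  congr (Posz _); apply: eq_card => x; rewrite !in_set.
  case: (eqVneq #|x| k) => [hx|]; rewrite ?andbF //.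
  by rewrite (notS (z:=x) hS) ?hx // (notS (z:=x) hS') ?hx.
congr (Posz (\rank _)); apply/matrixP => a b; rewrite !mxE.
set x := nth set0 al a; set y := nth set0 al b.
cbv zeta; case: (eqVneq #|y| k.-1.+1) => [hy|]; rewrite ?andbF //.
rewrite ek in hy; rewrite (mem_L' (z:=y) hS) ?hy // (mem_L' (z:=y) hS') ?hy //.
case: (eqVneq #|x| k.+1) => [hx|hx]; last by rewrite (mem_L' (z:=x) hS) // (mem_L' (z:=x) hS').
have -> : bdcoef F x y = 0.
  apply/eqP/negPn/negP => /bdcoef_facet /andP[_ /eqP]; rewrite hx hy => e.
  by clear -e; lia.
by rewrite !if_same.
Qed.

End Betti.


Section Pos.
Variables (R : realType) (d n : nat) (P : 'I_n -> 'rV[R]_d) (F : fieldType).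
Variables (k : nat) (hk1 : (1 <= k)%N) (s : seq {set 'I_n}).
Hypothesis hs : simplexwise_refinement P s.
Implicit Types (x y z : {set 'I_n}).

Lemma inner_zero x l : (l < size s)%N ->
  \sum_(q < size s | #|nth set0 s q| == k.+1)
     bdcoef F x (nth set0 s q) * bdcoef F (nth set0 s q) (nth set0 s l) = 0.
Proof.
move=> hl; set y := nth set0 s l.
have yD : y \in DEL P by rewrite -(mem_s hs) mem_nth.
case: (eqVneq #|x| k) => hx; last first.
  apply: big1 => q /eqP hq.
  case: (eqVneq (bdcoef F x (nth set0 s q)) 0) => [->|/bdcoef_facet /andP[_ /eqP]]; first by rewrite mul0r.
  by rewrite hq => -[] /esym/eqP; rewrite (negbTE hx).
have -> : \sum_(q < size s | #|nth set0 s q| == k.+1)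
     bdcoef F x (nth set0 s q) * bdcoef F (nth set0 s q) y =
   \sum_(q < size s) bdcoef F x (nth set0 s q) * bdcoef F (nth set0 s q) y.
  rewrite [in RHS](bigID (fun q : 'I_(size s) => #|nth set0 s q| == k.+1)) /=.
  rewrite [X in _ = _ + X]big1 ?addr0 // => q /negbTE hq.
  case: (eqVneq (bdcoef F x (nth set0 s q)) 0) => [->|/bdcoef_facet /andP[_ /eqP]]; first by rewrite mul0r.
  by rewrite hx => e; move: hq; rewrite e eqxx.
have e : \sum_(q < size s) bdcoef F x (nth set0 s q) * bdcoef F (nth set0 s q) y =
   \sum_(z <- s) bdcoef F x z * bdcoef F z y by rewrite (big_nth set0) big_mkord.
rewrite e big_uniq ?(s_uniq hs) //.
rewrite (eq_bigl (fun z => z \in [set z | z \in s])); last by move=> z; rewrite inE.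
apply: bdbd_gen => z zy z0; rewrite inE (mem_s hs); exact: del_sub yD zy z0.
Qed.


Lemma pos_part (i j : nat) (hi : (i < size s)%N) (hj : (j < size s)%N)
  (hr : (rk F s i j.+1 + rk F s i.+1 j = rk F s i.+1 j.+1 + rk F s i j + 1)%N)
  (hdim : #|nth set0 s i| = k.+1) :
  (bdrow F (nth set0 s i) <=
     SS F [set y in DELk P k | prec P k y (nth set0 s i)])%MS.
Proof.
set sg := nth set0 s i.
have gap : (rk F s i.+1 j.+1 < rk F s i j.+1)%N.
  have := rk_mono F s i j; clear -hr; lia.
rewrite !rkE in gap.
set A := rkmx F s i j.+1 in gap; set B := rkmx F s i.+1 j.+1 in gap.
have [u [uB [q0 uA]]] : exists u : 'rV[F]_(size s),
    u *m B^T = 0 /\ exists q, (u *m A^T) 0 q != 0.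
  set K := kermx B^T.
  case: (pickP (fun rc : 'I_(size s) * 'I_(size s) => (K *m A^T) rc.1 rc.2 != 0)) => [[r c] /= h|h].
    exists (row r K); split; first by rewrite -row_mul mulmx_ker row0.
    by exists c; rewrite -row_mul mxE.
  have KA : K *m A^T = 0.
    by apply/matrixP => r c; move: (h (r, c)) => /= /negbFE/eqP ->; rewrite mxE.
  have : (K <= kermx A^T)%MS by apply/sub_kermxP.
  move/mxrankS; rewrite !mxrank_ker !mxrank_tr => le.
  have rA := rank_leq_row A; have rB := rank_leq_row B.
  move: gap le rA rB; clear; lia.
pose cc (l : 'I_(size s)) := if (l < j.+1)%N then u 0 l else 0.
pose v (q : 'I_(size s)) := \sum_(l < size s) bdcoef F (nth set0 s q) (nth set0 s l) * cc l.
have ent : forall (a : nat) (q : 'I_(size s)),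
    (u *m (rkmx F s a j.+1)^T) 0 q = if (a <= q)%N then v q else 0.
  move=> a q; rewrite !mxE; case: (leqP a q) => h.
    apply: eq_bigr => l _; rewrite !mxE h /= /cc; case: (l < j.+1)%N; last by rewrite !mulr0.
    by rewrite mulrC.
  by apply: big1 => l _; rewrite !mxE leqNgt h /= mulr0.
have vz : forall q : 'I_(size s), (i < q)%N -> v q = 0.
  move=> q iq; have := congr1 (fun M : 'M[F]_(1, size s) => M 0 q) uB.
  by rewrite /= /B ent iq mxE.
have vi : v (Ordinal hi) != 0.
  move: uA; rewrite /A ent; case: (leqP i q0) => h; last by rewrite eqxx.
  case: (ltngtP i q0) => iq; [by rewrite (vz q0 iq) eqxx | by move: h; rewrite leqNgt iq | ].
  by have -> : Ordinal hi = q0 by apply/val_inj; rewrite /= iq.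
have rel : \sum_(q < size s | #|nth set0 s q| == k.+1) v q *: bdrow F (nth set0 s q) = 0.
  apply/rowP => a; rewrite summxE mxE.
  under eq_bigr => q _ do rewrite !mxE /v mulr_suml.
  rewrite exchange_big /=; apply: big1 => l _.
  have iz := inner_zero (nth set0 (allsets n) a) (ltn_ord l).
  transitivity (cc l * 0); last by rewrite mulr0.
  rewrite -[X in _ = _ * X]iz mulr_sumr.
  by apply: eq_bigr => q _; ring.
set T := [set y in DELk P k | prec P k y sg].
have sgs : sg \in s by apply: mem_nth.
move: rel; rewrite (bigD1 (Ordinal hi)) /=; last by rewrite hdim eqxx.
move/eqP; rewrite addr_eq0 => /eqP e.
have -> : bdrow F sg = (- (v (Ordinal hi))^-1) *:
    \sum_(q < size s | (#|nth set0 s q| == k.+1) && (q != Ordinal hi)) v q *: bdrow F (nth set0 s q).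
  by rewrite scaleNr -scalerN -e scalerA mulVf // scale1r.
apply: scalemx_sub; apply: summx_sub => q /andP[hq qi].
case: (ltngtP q i) => qi'.
- apply: scalemx_sub; apply: (sumsmx_sup (nth set0 s q)); last by rewrite genmxE.
  rewrite in_set /DELk in_set -(mem_s hs) mem_nth ?hq //=.
  have nq : nth set0 s q != sg.
    by rewrite /sg nth_uniq ?(s_uniq hs) //; apply: contra qi => /eqP qe; apply/eqP/val_inj.
  case/orP: (prec_tot_k P hk1 (eqP hq) hdim nq) => // p.
  have := s_prec hk1 hs sgs (mem_nth set0 (ltn_ord q)) hdim (eqP hq) p.
  rewrite !index_uniq ?(s_uniq hs) // => iq.
  by move: (ltn_trans iq qi'); rewrite ltnn.
- by rewrite vz // scale0r sub0mx.
- by exfalso; move/eqP: qi; apply; apply: val_inj.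
Qed.

End Pos.


Section MSA.
Variables (R : realType) (d n : nat) (P : 'I_n -> 'rV[R]_d) (F : fieldType).
Variables (k : nat) (hk1 : (1 <= k)%N) (s : seq {set 'I_n}).
Hypothesis hs : simplexwise_refinement P s.
Implicit Types (x y z : {set 'I_n}).

Lemma msa_part (i j : nat) (hi : (i < size s)%N) (hj : (j < size s)%N)
  (hr : (rk F s i j.+1 + rk F s i.+1 j = rk F s i.+1 j.+1 + rk F s i j + 1)%N)
  (hdim : #|nth set0 s i| = k.+1) :
  forall S : {set {set 'I_n}}, is_MSA P F k S -> nth set0 s i \notin S.
Proof.
move=> S [[hS [hb1 hb2]] hmin]; apply/negP => sgS.
set sg := nth set0 s i in sgS hdim.
have hb1' : reduced_betti F (LL P k S) k = 0 := hb1.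
have hb2' : reduced_betti F (LL P k S) k.-1 = 0 := hb2.
rewrite (betti_k F hk1 hS) in hb1'.
have indep : \rank (SS F S) = #|S|.
  by move/eqP: hb1'; rewrite subr_eq0 => /eqP [].
set T := [set y in DELk P k | prec P k y sg].
have pos : (bdrow F sg <= SS F T)%MS := pos_part hk1 hs hi hj hr hdim.
have eS : S = sg |: (S :\ sg) by rewrite setD1K.
have sgn : sg \notin S :\ sg by rewrite !inE eqxx.
have cS : #|S| = (#|S :\ sg|).+1 by rewrite (cardsD1 sg S) sgS.
have [y yT ny] : exists2 y, y \in T & ~~ (bdrow F y <= SS F (S :\ sg))%MS.
  case: (boolP [exists y in T, ~~ (bdrow F y <= SS F (S :\ sg))%MS]).
    by case/existsP => y /andP[yT ny]; exists y.
  move/existsPn => hall; exfalso.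
  have TS : (SS F T <= SS F (S :\ sg))%MS.
    apply/sumsmx_subP => y yT; rewrite genmxE.
    by move: (hall y); rewrite yT /= negbK.
  have : (SS F S <= SS F (S :\ sg))%MS.
    rewrite {1}eS SS_add // addsmx_sub submx_refl andbT genmxE.
    exact: submx_trans pos TS.
  move/mxrankS; rewrite indep => h.
  by move: (leq_trans h (rank_SS_le F (S :\ sg))); rewrite cS ltnn.
have yn : y \notin S :\ sg.
  apply: contra ny => yS; apply: (sumsmx_sup y) => //; by rewrite genmxE.
set S' := y |: (S :\ sg).
have rD : \rank (SS F (S :\ sg)) = #|S :\ sg|.
  apply/eqP; rewrite eqn_leq rank_SS_le /=.
  have := rank_add_le F sgn; rewrite -eS indep cS ltnS; done.
have rS' : \rank (SS F S') = \rank (SS F S) by rewrite rank_add // rD indep cS.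
have cS' : #|S'| = #|S| by rewrite cardsU1 yn cS add1n.
have yD : y \in DELk P k by move: yT; rewrite in_set => /andP[].
have hS' : S' \subset DELk P k.
  apply/subsetP => z; rewrite in_setU1 => /orP[/eqP->//|].
  by rewrite in_setD1 => /andP[_ /(subsetP hS)].
have acyc : spanning_acycle P F k S'.
  split=> //; split.
    change (reduced_betti F (LL P k S') k = 0).
    by rewrite (betti_k F hk1 hS') rS' indep cS' subrr.
  change (reduced_betti F (LL P k S') k.-1 = 0).
  by rewrite (betti_km1 hk1 hS' hS rS').
pose w := fun x : {set 'I_n} => ((index x s)%:R : R).
have hw : increasing_weight P k w.
  move=> a b; rewrite !in_set => /andP[aD /eqP ha] /andP[bD /eqP hb] p.
  rewrite /w ltr_nat; apply: (s_prec hk1 hs) => //; by rewrite (mem_s hs) /DEL in_set.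
have := hmin w hw S' acyc.
rewrite (big_setD1 sg sgS) (big_setU1 _ yn) /= lerD2r /w ler_nat.
have : prec P k y sg by move: yT; rewrite in_set => /andP[].
move/(s_prec hk1 hs) => h.
have [ys hy] : y \in s /\ #|y| = k.+1.
  move: yD; rewrite /DELk in_set => /andP[yD' /eqP ->]; split=> //; by rewrite (mem_s hs).
have sgs : sg \in s by apply: mem_nth.
move=> le; have lt := h ys sgs hy hdim.
by move: (leq_trans lt le); rewrite ltnn.
Qed.

End MSA.


Unset Implicit Arguments.

Theorem lemma3 (R : realType) (F : fieldType) (d n : nat) (P : 'I_n -> 'rV[R]_d)
  (P_inj : injective P) (P_gp : general_position P)
  (k : nat) (hk1 : (1 <= k)%N) (hkd : (k < d)%N)
  (s : seq {set 'I_n}) (hs : simplexwise_refinement P s)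
  (i j : nat) (hpair : persistence_pair F s i j)
  (hdim : #|nth set0 s i| = k.+1)
  (hpos : diam P (nth set0 s i) < diam P (nth set0 s j)) :
  USC P k (nth set0 s i) /\
  (forall S : {set {set 'I_n}}, is_MSA P F k S -> nth set0 s i \notin S).
Proof.
case: hpair => hi hj hr.
split; first exact: (usc_part hk1 hs hi hj hr hdim hpos).
exact: (msa_part hk1 hs hi hj hr hdim).
Qed.
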